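(* Let $A$ be a quasi-quantale with top $1$ and bottom $0$, and let $B$ be a subquasi-quantale of $A$ with $0,1\in B$ and $1b\leq b$, $b1\leq b$ for all $b\in B$. Endow $Spec_B(A)$ with the topology whose open sets are $\mathcal{U}(b)=\{p\in Spec_B(A)\mid b\nleq p\}$, $b\in B$, let $\mathcal{O}(Spec_B(A))$ be its frame of open sets, and define $\mathcal{U}_*\colon\mathcal{O}(Spec_B(A))\to B$ by $\mathcal{U}_*(W)=\bigvee\{b\in B\mid \mathcal{U}(b)\subseteq W\}$. Then the closure operator $\mu=\mathcal{U}_*\circ\mathcal{U}\colon B\to B$ is a multiplicative pre-nucleus: for all $a,b\in B$, $\mu(ab)=\mu(a)\wedge\mu(b)$ and $\mu(a\sqcap b)=\mu(a)\wedge\mu(b)$, where $\sqcap$ denotes the meet in the complete lattice $B$.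
   Context: A quasi-quantale is a complete lattice $A$ equipped with an associative binary operation $(a,b)\mapsto ab$ such that for every directed subset $X\subseteq A$ (non-empty, and any two elements of $X$ have an upper bound in $X$) and every $a\in A$: $(\bigvee X)a=\bigvee\{xa\mid x\in X\}$ and $a(\bigvee X)=\bigvee\{ax\mid x\in X\}$. A subquasi-quantale of $A$ is a subset $B\subseteq A$ closed under arbitrary joins of $A$ and under the product. An element $p\in A$ is prime relative to $B$ if $p\neq 1$ and whenever $a,b\in B$ with $ab\leq p$, then $a\leq p$ or $b\leq p$. $Spec_B(A)$ is the set of elements of $A$ prime relative to $B$. *)

(* Defs.v *)
Set Implicit Arguments.

Definition directed (A : Type) (le : A -> A -> Prop) (X : A -> Prop) : Prop :=
  (exists x, X x) /\
  (forall x y, X x -> X y -> exists z, X z /\ le x z /\ le y z).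

Record quasi_quantale := QuasiQuantale {
  car :> Type;
  le : car -> car -> Prop;
  sup : (car -> Prop) -> car;
  mul : car -> car -> car;
  le_refl : forall x, le x x;
  le_trans : forall x y z, le x y -> le y z -> le x z;
  le_antisym : forall x y, le x y -> le y x -> x = y;
  sup_ub : forall (X : car -> Prop) x, X x -> le x (sup X);
  sup_least : forall (X : car -> Prop) y, (forall x, X x -> le x y) -> le (sup X) y;
  mul_assoc : forall x y z, mul (mul x y) z = mul x (mul y z);
  mul_sup_dir_l : forall (X : car -> Prop) a, directed le X ->
      mul (sup X) a = sup (fun y => exists x, X x /\ y = mul x a);
  mul_sup_dir_r : forall (X : car -> Prop) a, directed le X ->
      mul a (sup X) = sup (fun y => exists x, X x /\ y = mul a x)
}.

Arguments le {q} _ _.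
Arguments sup {q} _.
Arguments mul {q} _ _.

Section QQ.
Variable A : quasi_quantale.

Definition top : car A := sup (fun _ : car A => True).
Definition bot : car A := sup (fun _ : car A => False).

Definition subquasi_quantale (B : car A -> Prop) : Prop :=
  (forall X : A -> Prop, (forall x, X x -> B x) -> B (sup X)) /\
  (forall a b, B a -> B b -> B (mul a b)).

Definition primeB (B : car A -> Prop) (p : car A) : Prop :=
  p <> top /\
  forall a b, B a -> B b -> le (mul a b) p -> le a p \/ le b p.

Definition SpecB (B : car A -> Prop) : car A -> Prop := primeB B.

Definition U (B : car A -> Prop) (b : car A) : car A -> Prop :=
  fun p => SpecB B p /\ ~ le b p.

Definition is_open (B : car A -> Prop) (W : car A -> Prop) : Prop :=
  exists b, B b /\ forall p, W p <-> U B b p.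

Definition U_star (B : car A -> Prop) (W : car A -> Prop) : car A :=
  sup (fun b => B b /\ forall p, U B b p -> W p).

Definition mu (B : car A -> Prop) (b : car A) : car A := U_star B (U B b).

(* meet in the complete lattice B (whose joins are those of A) *)
Definition meetB (B : car A -> Prop) (a b : car A) : car A :=
  sup (fun c => B c /\ le c a /\ le c b).

End QQ.

Arguments top {A}.
Arguments bot {A}.
Arguments subquasi_quantale {A} B.
Arguments primeB {A} B p.
Arguments SpecB {A} B _.
Arguments U {A} B b _.
Arguments is_open {A} B W.
Arguments U_star {A} B W.
Arguments mu {A} B b.
Arguments meetB {A} B a b.

(* Main.v *)
Require Import Defs.
From Stdlib Require Import Classical.

Section S.
Variable A : quasi_quantale.
Variable B : car A -> Prop.

Lemma le_sup2 (x y : car A) : le x y -> sup (fun z => z = x \/ z = y) = y.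
Proof.
  intro H. apply le_antisym.
  - apply sup_least. intros z [->| ->]; auto using le_refl.
  - apply sup_ub. auto.
Qed.

Lemma dir2 (x y : car A) : le x y -> directed le (fun z => z = x \/ z = y).
Proof.
  intro H. split. exists x; auto.
  intros u v Hu Hv. exists y. split; [auto|].
  destruct Hu as [->| ->]; destruct Hv as [->| ->]; auto using le_refl.
Qed.

Lemma mul_mono_l (x y a : car A) : le x y -> le (mul x a) (mul y a).
Proof.
  intro H. rewrite <- (@le_sup2 x y H). rewrite mul_sup_dir_l by (apply dir2; auto).
  apply sup_ub. exists x. auto.
Qed.

Lemma mul_mono_r (x y a : car A) : le x y -> le (mul a x) (mul a y).
Proof.
  intro H. rewrite <- (@le_sup2 x y H). rewrite mul_sup_dir_r by (apply dir2; auto).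
  apply sup_ub. exists x. auto.
Qed.

Lemma le_top (x : car A) : le x top.
Proof. apply sup_ub. exact I. Qed.

Definition V (x p : car A) := SpecB B p /\ le x p.

Lemma mu_B (b : car A) : subquasi_quantale B -> B (mu B b).
Proof. intros [Hs _]. apply Hs. intros x [Hx _]. exact Hx. Qed.

Lemma mu_V (b p : car A) : V b p -> le (mu B b) p.
Proof.
  intros [Hp Hb]. apply sup_least. intros c [Hc HU].
  apply NNPP. intro Hn. destruct (HU p (conj Hp Hn)) as [_ Hn']. auto.
Qed.

Lemma mu_ge (b c : car A) : B c -> (forall p, V b p -> le c p) -> le c (mu B b).
Proof.
  intros Hc H. apply sup_ub. split; auto.
  intros p [Hp Hn]. split; auto. intro Hb. apply Hn. apply H. split; auto.
Qed.

Lemma mu_mono (a b : car A) : le a b -> le (mu B a) (mu B b).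
Proof.
  intro H. apply sup_least. intros c [Hc HU]. apply sup_ub. split; auto.
  intros p [Hp Hn]. destruct (HU p (conj Hp Hn)) as [_ Ha]. split; auto.
  intro Hb. apply Ha. eapply le_trans; eauto.
Qed.

Lemma key (x a b : car A) : subquasi_quantale B -> B x ->
  le x a -> le x b -> (forall p, V x p -> V a p \/ V b p) ->
  mu B x = meetB B (mu B a) (mu B b).
Proof.
  intros HB Hx Ha Hb HV. apply le_antisym.
  - apply sup_ub. split; [apply mu_B; auto|]. split; apply mu_mono; auto.
  - apply mu_ge.
    + destruct HB as [Hs _]. apply Hs. intros c [Hc _]. exact Hc.
    + intros p Hp. destruct (HV p Hp) as [H|H]; apply mu_V in H;
      (eapply le_trans; [|exact H]); apply sup_least; intros c [_ [H1 H2]]; auto.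
Qed.

End S.

Theorem theorem3p21 (A : quasi_quantale) (B : car A -> Prop) :
  subquasi_quantale B ->
  B (@bot A) -> B (@top A) ->
  (forall b, B b -> le (mul (@top A) b) b) ->
  (forall b, B b -> le (mul b (@top A)) b) ->
  forall a b, B a -> B b ->
    mu B (mul a b) = meetB B (mu B a) (mu B b) /\
    mu B (meetB B a b) = meetB B (mu B a) (mu B b).
Proof.
  intros HB _ _ Hl Hr a b Ha Hb.
  assert (Hab : B (mul a b)) by (apply (proj2 HB); auto).
  assert (Ha' : le (mul a b) a)
    by (eapply le_trans; [apply mul_mono_r, le_top|apply Hr; auto]).
  assert (Hb' : le (mul a b) b)
    by (eapply le_trans; [apply mul_mono_l, le_top|apply Hl; auto]).
  assert (HV : forall p, @V A B (mul a b) p -> @V A B a p \/ @V A B b p).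
  { intros p [Hp Hle]. destruct ((proj2 Hp) a b Ha Hb Hle); [left|right]; split; auto. }
  split.
  - apply key; auto.
  - assert (Hm1 : le (meetB B a b) a) by (apply sup_least; intros c [_ [H _]]; auto).
    assert (Hm2 : le (meetB B a b) b) by (apply sup_least; intros c [_ [_ H]]; auto).
    assert (Hmab : le (mul a b) (meetB B a b)) by (apply sup_ub; auto).
    apply key; auto.
    + apply (proj1 HB). intros c [Hc _]; auto.
    + intros p [Hp Hle]. apply HV. split; auto. eapply le_trans; eauto.
Qed.
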